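(* Let $(\mathfrak g,[\cdot,\cdot],[\![\cdot,\cdot,\cdot]\!];\omega)$ be a symplectic Lie-Yamaguti algebra and let $( *,\{\cdot,\cdot,\cdot\})$ be the compatible pre-Lie-Yamaguti algebra structure on $\mathfrak g$ determined by $\omega(x*y,z)=-\omega(y,[x,z])$ and $\omega(\{x,y,z\},w)=\omega(x,[\![w,z,y]\!])$. Then $\omega(\{x,y,z\}_D,w)=-\omega(z,[\![x,y,w]\!])$ for all $x,y,z,w\in\mathfrak g$.
   Context: All vector spaces are over a field of characteristic $0$. A Lie-Yamaguti algebra is a vector space $\mathfrak g$ with a bilinear skew-symmetric $[\cdot,\cdot]$ and a trilinear $[\![\cdot,\cdot,\cdot]\!]$ skew-symmetric in its first two arguments such that for all $x,y,z,w,t$: (1) $[[x,y],z]+[[y,z],x]+[[z,x],y]+[\![x,y,z]\!]+[\![y,z,x]\!]+[\![z,x,y]\!]=0$; (2) $[\![[x,y],z,w]\!]+[\![[y,z],x,w]\!]+[\![[z,x],y,w]\!]=0$; (3) $[\![x,y,[z,w]]\!]=[[\![x,y,z]\!],w]+[z,[\![x,y,w]\!]]$; (4) $[\![x,y,[\![z,w,t]\!]]\!]=[\![[\![x,y,z]\!],w,t]\!]+[\![z,[\![x,y,w]\!],t]\!]+[\![z,w,[\![x,y,t]\!]]\!]$. A symplectic Lie-Yamaguti algebra is one equipped with a nondegenerate skew-symmetric bilinear form $\omega$ such that for all $x,y,z,w$: $\omega(x,[y,z])+\omega(y,[z,x])+\omega(z,[x,y])=0$ and $\omega(z,[\![x,y,w]\!])-\omega(x,[\![w,z,y]\!])+\omega(y,[\![w,z,x]\!])-\omega(w,[\![x,y,z]\!])=0$.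 For operations $*$ and $\{\cdot,\cdot,\cdot\}$ on $\mathfrak g$, $(x,y,z):=(x*y)*z-x*(y*z)$ and $\{x,y,z\}_D:=\{z,y,x\}-\{z,x,y\}+(y,x,z)-(x,y,z)$. (That the operations defined by the two displayed formulas form a pre-Lie-Yamaguti algebra compatible with $\mathfrak g$ is part of the setting.) *)

(* Defs.v *)
From HB Require Import structures.
From mathcomp Require Import all_boot all_order all_algebra.
Set Implicit Arguments. Unset Strict Implicit. Unset Printing Implicit Defensive.
Import GRing.Theory.
Local Open Scope ring_scope.

Section LY.
Variables (F : fieldType) (V : lmodType F).

Definition bilinear_skew (br : V -> V -> V) : Prop :=
  (forall (a : F) x y z, br (a *: x + y) z = a *: br x z + br y z) /\
  (forall x y, br x y = - br y x).

Definition trilinear_skew12 (tr : V -> V -> V -> V) : Prop :=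
  (forall (a : F) x x' y z, tr (a *: x + x') y z = a *: tr x y z + tr x' y z) /\
  (forall (a : F) x y y' z, tr x (a *: y + y') z = a *: tr x y z + tr x y' z) /\
  (forall (a : F) x y z z', tr x y (a *: z + z') = a *: tr x y z + tr x y z') /\
  (forall x y z, tr x y z = - tr y x z).

Definition LieYamaguti (br : V -> V -> V) (tr : V -> V -> V -> V) : Prop :=
  bilinear_skew br /\ trilinear_skew12 tr /\
   (forall x y z, br (br x y) z + br (br y z) x + br (br z x) y
                  + tr x y z + tr y z x + tr z x y = 0) /\
   (forall x y z w, tr (br x y) z w + tr (br y z) x w + tr (br z x) y w = 0) /\
   (forall x y z w, tr x y (br z w) = br (tr x y z) w + br z (tr x y w)) /\
   (forall x y z w t, tr x y (tr z w t)
      = tr (tr x y z) w t + tr z (tr x y w) t + tr z w (tr x y t)).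

Definition symplectic_form (om : V -> V -> F) : Prop :=
  [/\ (forall (a : F) x y z, om (a *: x + y) z = a * om x z + om y z),
      (forall x y, om x y = - om y x) &
      (forall x, (forall y, om x y = 0) -> x = 0)].

Definition symplectic_LY (br : V -> V -> V) (tr : V -> V -> V -> V)
    (om : V -> V -> F) : Prop :=
  [/\ LieYamaguti br tr, symplectic_form om,
   (forall x y z, om x (br y z) + om y (br z x) + om z (br x y) = 0) &
   (forall x y z w, om z (tr x y w) - om x (tr w z y) + om y (tr w z x)
                    - om w (tr x y z) = 0)].

Definition assoc (mul : V -> V -> V) (x y z : V) : V :=
  mul (mul x y) z - mul x (mul y z).

Definition bracketD (mul : V -> V -> V) (br3 : V -> V -> V -> V) (x y z : V) : V :=
  br3 z y x - br3 z x y + assoc mul y x z - assoc mul x y z.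

End LY.

(* Main.v *)
Require Import Defs.
From mathcomp Require Import all_boot all_order all_algebra.
From mathcomp Require Import ring.
Import GRing.Theory.
Local Open Scope ring_scope.

Theorem corollary4p5 (F : fieldType) (V : lmodType F)
    (charF0 : [pchar F] =i pred0)
    (br : V -> V -> V) (tr : V -> V -> V -> V) (om : V -> V -> F)
    (mul : V -> V -> V) (br3 : V -> V -> V -> V) :
  symplectic_LY br tr om ->
  (forall x y z, om (mul x y) z = - om y (br x z)) ->
  (forall x y z w, om (br3 x y z) w = om x (tr w z y)) ->
  forall x y z w, om (bracketD mul br3 x y z) w = - om z (tr x y w).
Proof.
move=> [[[brL brS] [[trL1 [trL2 [trL3 trS]]] [LY1 _]]] [omL omS omN] inv _] Hmul Hbr3.
have omDl a b c : om (a + b) c = om a c + om b c.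
  by have := omL 1 a b c; rewrite scale1r mul1r.
have om0l c : om 0 c = 0.
  by have := omDl 0 0 c; rewrite addr0 => H; apply: (addrI (om 0 c)); rewrite addr0 -H.
have omNl a c : om (- a) c = - om a c.
  by have := omL (-1) a 0 c; rewrite addr0 om0l addr0 scaleN1r mulN1r.
have omDr a b c : om c (a + b) = om c a + om c b.
  by rewrite omS omDl opprD -!omS.
have omNr a c : om c (- a) = - om c a.
  by rewrite omS omNl opprK omS.
have om0r c : om c 0 = 0 by rewrite omS om0l oppr0.
have brDl a b c : br (a + b) c = br a c + br b c.
  by have := brL 1 a b c; rewrite !scale1r.
have br0l c : br 0 c = 0.
  by have := brDl 0 0 c; rewrite addr0 => H; apply: (addrI (br 0 c)); rewrite addr0 -H.
have brNl a c : br (- a) c = - br a c.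
  by have := brL (-1) a 0 c; rewrite addr0 br0l addr0 !scaleN1r.
have compat a b : mul a b - mul b a = br a b.
  apply/eqP; rewrite -subr_eq0; apply/eqP; apply: omN => c.
  rewrite omDl omNl omDl omNl !Hmul.
  have := inv a b c; rewrite (brS c a) omNr.
  move=> H; rewrite (omS (br a b)) -H.
  move: (om a (br b c)) (om b (br a c)) (om c (br a b)) => a1 a2 a3; ring.
move=> x y z w.
rewrite /bracketD /assoc !omDl !omNl !omDl !omNl !Hbr3 !Hmul.
have E1 : om z (br (mul x y) w) - om z (br (mul y x) w) = om z (br (br x y) w).
  by rewrite -omNr -omDr -brNl -brDl compat.
have E2 := congr1 (om z) (LY1 x y w).
rewrite om0r !omDr in E2.
have E3 : om z (br x (br y w)) = - om z (br (br y w) x) by rewrite brS omNr.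
have E4 : om z (br y (br x w)) = om z (br (br w x) y).
  by rewrite brS (brS x w) brNl opprK.
have E5 : om z (tr w y x) = - om z (tr y w x) by rewrite trS omNr.
rewrite E3 E4 E5.
apply: (addIr (om z (tr x y w))); rewrite addNr -E2 -E1.
move: (om z (tr w x y)) (om z (tr y w x)) (om z (tr x y w)) (om z (br (mul y x) w)) (om z (br (mul x y) w)) (om z (br (br y w) x)) (om z (br (br w x) y)) => a1 a2 a3 a4 a5 a6 a7.
ring.
Qed.
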